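(* Let $T$ be the regular rooted tree of valence $p\geq 2$ with the embedded wire diffeology $\mathcal{D}_T$, and equip $\operatorname{Aut}T$ with the functional diffeology. Then every plot $P:\mathbb{R}\to\operatorname{Aut}T$ of this diffeology is a constant map.
   Context: Fix a finite alphabet $A$ with $|A|=p\geq 2$. The vertices of $T$ are the finite words over $A$ (the root is the empty word); two vertices are joined by an edge iff they have the form $a_1\dots a_n$ and $a_1\dots a_na_{n+1}$. As a topological space, $T$ is the 1-dimensional CW complex obtained by realizing each edge as a copy of $[0,1]$, with its usual topology. $\operatorname{Aut}T$ is the group of bijections of the vertex set fixing the root and preserving adjacency; each is regarded as a homeomorphism of the geometric realization mapping each edge affinely onto its image edge. A diffeology on a set $X$ is a collection of maps $U\to X$ (''plots''), $U$ ranging over open subsets of all $\mathbb{R}^n$, containing all constant maps, closed under precomposition with smooth maps, and satisfying the sheaf condition. The embedded wire diffeology $\mathcal{D}_T$ is the diffeology on $T$ generated by (i.e. the smallest diffeology containing) all maps $\gamma:\mathbb{R}\to T$ that are injective, continuous, and homeomorphisms onto their images. A map between diffeological spaces is smooth if it sends plots to plots. The functional diffeology on $C^\infty(T,T)$ is the coarsest diffeology such that the evaluation map $C^\infty(T,T)\times T\to T$ is smooth (with the product diffeology, the coarsest making projections smooth); $\operatorname{Aut}T\subseteq C^\infty(T,T)$ carries the subset diffeology. Equivalently, $P:U\to\operatorname{Aut}T$ is a plot iff $(u,x)\mapsto P(u)(x)$ is smooth $U\times T\to T$. *)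

(* Defs.v *)
From HB Require Import structures.
From mathcomp Require Import all_boot all_order all_algebra.
From mathcomp Require Import all_classical all_reals all_analysis.
Set Implicit Arguments.
Unset Strict Implicit.
Unset Printing Implicit Defensive.
Import Order.TTheory GRing.Theory Num.Theory.
Import numFieldNormedType.Exports.
Local Open Scope classical_set_scope.
Local Open Scope ring_scope.

Section TreeDiffeology.
Variables (R : realType) (A : finType).

Fixpoint iderive (m : nat) (V : normedModType R) (vs : seq 'rV[R]_m)
    (f : 'rV[R]_m -> V) : 'rV[R]_m -> V :=
  match vs with
  | [::] => f
  | v :: vs' => fun x => 'D_v (iderive vs' f) x
  end.

(* f is C^infty on the open set U: all iterated directional derivatives exist
   and are continuous at every point of U. Values of f outside U are irrelevant. *)
Definition smooth_on (m : nat) (V : normedModType R) (U : set 'rV[R]_m)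
    (f : 'rV[R]_m -> V) : Prop :=
  forall (vs : seq 'rV[R]_m) (x : 'rV[R]_m), U x ->
    (forall v : 'rV[R]_m, derivable (iderive vs f) x v) /\
    {for x, continuous (iderive vs f)}.

(* A point is (w, t): the root is ([::], 0); for w nonempty and 0 < t <= 1,
   (w, t) is the point at distance t from parent(w) on the edge [parent(w), w];
   (w, 1) is the vertex w. *)
Definition tpoint_ok (x : seq A * R) : bool :=
  if x.1 is [::] then x.2 == 0 else (0 < x.2) && (x.2 <= 1).

Definition TPoint := {x : seq A * R | tpoint_ok x}.

Lemma root_ok : tpoint_ok ([::], 0).
Proof. by rewrite /tpoint_ok /=. Qed.

Definition troot : TPoint := exist _ ([::], 0) root_ok.

Definition mkpt (x : seq A * R) : TPoint := insubd troot x.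

Definition parent (w : seq A) : seq A := take (size w).-1 w.

Definition vtx (u : seq A) : TPoint := mkpt (u, (if u is [::] then 0 else 1)).

Definition edge_pt (w : seq A) (s : R) : TPoint :=
  if s <= 0 then vtx (parent w) else mkpt (w, Num.min s 1).

(* CW (weak) topology: O is open iff its trace on each closed edge is open *)
Definition T_open (O : set TPoint) : Prop :=
  forall w : seq A, w != [::] ->
    exists W : set R, open W /\
      forall s : R, 0 <= s <= 1 -> (W s <-> O (edge_pt w s)).

Definition embedded_wire (g : R -> TPoint) : Prop :=
  injective g /\
  (forall O, T_open O -> open (g @^-1` O)) /\
  (forall V : set R, open V ->
     exists O, T_open O /\ g @` V = O `&` range g).

Definition param_family := forall n : nat, set 'rV[R]_n -> ('rV[R]_n -> TPoint) -> Prop.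

Definition is_diffeology (D : param_family) : Prop :=
  [/\ (* plots only depend on values on their domain *)
      (forall n U P P', D n U P -> (forall u, U u -> P u = P' u) -> D n U P'),
      (forall n U (x : TPoint), open U -> D n U (fun _ => x)),
      (forall n m U V P (F : 'rV[R]_m -> 'rV[R]_n),
          D n U P -> open V -> smooth_on V F -> (forall y, V y -> U (F y)) ->
          D m V (P \o F)) &
      (forall n U P, open U ->
          (forall u, U u -> exists V, [/\ open V, V u, V `<=` U & D n V P]) ->
          D n U P)].

Definition contains_wires (D : param_family) : Prop :=
  forall g, embedded_wire g -> D 1%N setT (fun v => g (v ord0 ord0)).

Definition DT_plot (n : nat) (U : set 'rV[R]_n) (P : 'rV[R]_n -> TPoint) : Prop :=
  open U /\ forall D, is_diffeology D -> contains_wires D -> D n U P.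

Definition adjacent (u v : seq A) : Prop :=
  (exists a, v = rcons u a) \/ (exists a, u = rcons v a).

Definition is_aut (g : seq A -> seq A) : Prop :=
  bijective g /\ g [::] = [::] /\ (forall u v, adjacent u v <-> adjacent (g u) (g v)).

(* the homeomorphism of the realization induced by g: it maps the edge
   [parent w, w] affinely onto [parent (g w), g w] *)
Definition realize (g : seq A -> seq A) (x : TPoint) : TPoint :=
  mkpt (g (sval x).1, (sval x).2).

(* P : R -> Aut T is a plot of the functional diffeology iff
   (u, x) |-> P(u)(x) is smooth R x T -> T, i.e. it sends every plot (f, Q)
   of the product diffeology on R x T to a plot of D_T *)
Definition aut_plot (P : R -> seq A -> seq A) : Prop :=
  forall (n : nat) (U : set 'rV[R]_n) (f : 'rV[R]_n -> R^o) (Q : 'rV[R]_n -> TPoint),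
    open U -> smooth_on U f -> DT_plot U Q ->
    DT_plot U (fun y => realize (P (f y)) (Q y)).

End TreeDiffeology.

(* Main.v *)
Require Import Defs.
From HB Require Import structures.
From mathcomp Require Import all_boot all_order all_algebra.
From mathcomp Require Import all_classical all_reals all_analysis.
From mathcomp Require Import lra.
Import Order.TTheory GRing.Theory Num.Theory.
Import numFieldNormedType.Exports.
Local Open Scope classical_set_scope.
Local Open Scope ring_scope.
Set Implicit Arguments.
Unset Strict Implicit.

Section Helpers.
Variables (R : realType) (A : finType).

Definition Dc (n : nat) (U : set 'rV[R]_n) (Pl : 'rV[R]_n -> TPoint R A) : Prop :=
  forall O, T_open O -> open (U `&` Pl @^-1` O).

Lemma open_cont (m n : nat) (V : set 'rV[R]_m) (W : set 'rV[R]_n)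
  (F : 'rV[R]_m -> 'rV[R]_n) :
  open V -> open W -> (forall x, V x -> {for x, continuous F}) ->
  open (V `&` F @^-1` W).
Proof.
move=> oV oW cF; rewrite openE => x [Vx Wx].
apply: filterI; first by move: oV; rewrite openE; apply.
apply: (cF x Vx); move: oW; rewrite openE; exact.
Qed.

Lemma Dc_diffeo : is_diffeology Dc.
Proof.
split.
- move=> n U P P' hD hPP' O hO.
  have -> : U `&` P' @^-1` O = U `&` P @^-1` O.
    by apply/seteqP; split => x [Ux Ox]; split => //=; rewrite ?hPP' // -hPP'.
  exact: hD.
- move=> n U x oU O hO.
  have [Ox|nOx] := pselect (O x).
    by have -> : U `&` (fun=> x) @^-1` O = U by apply/seteqP; split => y //= [].
  by have -> : U `&` (fun=> x) @^-1` O = set0 by apply/seteqP; split => y //= [].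
- move=> n m U V P F hD oV sF VU O hO.
  have -> : V `&` (P \o F) @^-1` O = V `&` F @^-1` (U `&` P @^-1` O).
    apply/seteqP; split => y /= [Vy Oy]; split => //.
    by split => //; apply: VU.
    by case: Oy.
  apply: open_cont => //; first exact: hD.
  by move=> x Vx; have [] := sF [::] x Vx.
- move=> n U P oU hloc O hO; rewrite openE => x [Ux Ox].
  have [V [oV Vx VU DV]] := hloc x Ux.
  have := DV O hO; rewrite openE => /(_ x (conj Vx Ox)).
  by apply: filterS => y [Vy Oy]; split => //; apply: VU.
Qed.

Lemma Dc_wires : contains_wires Dc.
Proof.
move=> g [_ [hg _]] O hO; rewrite setTI.
have -> : (fun v : 'rV[R]_1 => g (v ord0 ord0)) @^-1` O =
  (fun v : 'rV[R]_1 => v ord0 ord0) @^-1` (g @^-1` O) by [].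
apply: open_comp; last exact: hg.
by move=> x _; exact: coord_continuous.
Qed.

Lemma DT_Dc n (U : set 'rV[R]_n) Pl : DT_plot U Pl -> Dc U Pl.
Proof. by move=> [_ h]; apply: h; [exact: Dc_diffeo | exact: Dc_wires]. Qed.


Definition c00 (v : 'rV[R]_1) : R^o := v ord0 ord0.
Lemma c00_lin : linear c00.
Proof. by move=> a x y; rewrite /c00 !mxE. Qed.
HB.instance Definition _ := GRing.isLinear.Build R 'rV[R]_1 R^o *:%R c00 c00_lin.

Lemma c00_cont : continuous c00.
Proof. by move=> x; exact: coord_continuous. Qed.

Lemma iderive_c00 (vs : seq 'rV[R]_1) : vs <> [::] ->
  exists c : R^o, iderive vs c00 = cst c.
Proof.
elim: vs => [//|v vs IH] _.
case: vs IH => [|v' vs] IH.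
  exists (c00 v); apply/funext => x /=.
  by rewrite deriveE ?diff_lin //; [exact: c00_cont | exact: linear_differentiable c00_cont].
have [c hc] := IH ltac:(by []).
exists 0; apply/funext => x /=; rewrite -/(iderive (v' :: vs) c00) hc.
exact: derive_cst.
Qed.

Lemma smooth_c00 : smooth_on setT c00.
Proof.
move=> vs x _; case: vs => [|v vs].
  rewrite /=; split; last exact: c00_cont.
  by move=> v; apply: diff_derivable; exact: linear_differentiable c00_cont.
have [c hc] := @iderive_c00 (v :: vs) ltac:(by []).
rewrite hc; split; first by move=> ?; exact: derivable_cst.
exact: cst_continuous.
Qed.


Lemma mkptK (x : seq A * R) : tpoint_ok x -> sval (mkpt x) = x.
Proof. by move=> h; rewrite /mkpt insubdK. Qed.

Lemma vtx_val (u : seq A) : sval (@vtx R A u) = (u, if u is [::] then 0 else 1).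
Proof.
rewrite /vtx mkptK //; case: u => [|a u] /=; rewrite /tpoint_ok //=.
by rewrite ltr01 lexx.
Qed.

Lemma parent_neq (w : seq A) : w <> [::] -> parent w <> w.
Proof.
move=> hw /(congr1 size); rewrite /parent size_takel ?leq_pred //.
by case: w hw => [|a w] //= _ /eqP; rewrite eqn_leq ltnn andbF.
Qed.

Definition star (w0 : seq A) : set (TPoint R A) := fun x =>
  ((sval x).1 = w0 /\ 1/2 < (sval x).2) \/
  (parent (sval x).1 = w0 /\ (sval x).2 < 1/2).

Lemma star_vtx (w0 u : seq A) : w0 <> [::] -> (star w0 (@vtx R A u) <-> u = w0).
Proof.
move=> hw0; rewrite /star vtx_val /=; case: u => [|a u] /=.
  split; last by move=> h; rewrite h in hw0.
  by case=> -[h _]; rewrite -h in hw0.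
split; last by move=> ->; left; split => //; lra.
case=> -[h1 h2]; [exact: h1 | clear h1 hw0; exfalso; lra].
Qed.

Lemma open_andP (P : Prop) (Q : set R) : open Q -> open (fun s => P /\ Q s).
Proof.
move=> oQ; have [p|np] := pselect P.
  by have -> : (fun s => P /\ Q s) = Q by apply/seteqP; split => s //= [].
by have -> : (fun s => P /\ Q s) = set0 by apply/seteqP; split => s //= [].
Qed.

Lemma star_open (w0 : seq A) : w0 <> [::] -> T_open (star w0).
Proof.
move=> hw0 w hw.
exists (fun s : R => (w = w0 /\ 1/2 < s) \/ (parent w = w0 /\ s < 1/2)); split.
  apply: (@openU _ (fun s => _ /\ _) (fun s => _ /\ _)); apply: open_andP.
    exact: open_gt.
  exact: open_lt.
move=> s /andP[s0 s1]; rewrite /edge_pt; case: ifP => hs.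
  rewrite star_vtx //; have -> : s = 0 by clear -s0 hs; lra.
  have h0 : ~ (1/2 < (0:R)) by clear; lra.
  have h1 : (0:R) < 1/2 by clear; lra.
  split; [case=> -[h3 h2]; [by exfalso; apply: h0 | exact: h3] | by move=> h; right; split].
rewrite /star mkptK; last first.
  rewrite /tpoint_ok; case: w hw => [//|a w] _ /=.
  by rewrite (min_l s1) s1 andbT ltNge hs.
by rewrite (min_l s1).
Qed.

Lemma realize_vtx (g : seq A -> seq A) (w : seq A) :
  w <> [::] -> g w <> [::] -> realize g (@vtx R A w) = @vtx R A (g w).
Proof.
move=> hw hg; apply: val_inj => /=.
rewrite /realize vtx_val; case: w hw hg => // a w _ /= hg.
case: (g (a :: w)) hg => // b v _; by rewrite mkptK // /tpoint_ok /= ltr01 lexx.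
Qed.

End Helpers.

Theorem mainTheorem5 (R : realType) (A : finType) (hA : (1 < #|A|)%N)
    (P : R -> seq A -> seq A)
    (hPaut : forall u : R, is_aut (P u))
    (hPplot : aut_plot P) :
  forall u v : R, P u = P v.
Proof.
have hP0 : forall u, P u [::] = [::] by move=> u; have [_ [h _]] := hPaut u.
have hPne : forall u w, w <> [::] -> P u w <> [::].
  move=> u w hw h; have [[g hg _] _] := hPaut u.
  by apply: hw; rewrite -(hg w) h -(hP0 u) hg.
have key : forall w, w <> [::] -> forall w1, w1 <> [::] ->
    open [set u : R | P u w = w1].
  move=> w hw w1 hw1.
  have hQ : DT_plot setT (fun _ : 'rV[R]_1 => @vtx R A w).
    by split; [exact: openT | move=> D [_ hc _ _] _; exact: hc openT].
  have hpl := hPplot 1%N setT (@c00 R) _ openT (@smooth_c00 R) hQ.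
  have := DT_Dc hpl (@star_open R A w1 hw1).
  set S := (X in open X) => oS.
  have -> : [set u : R | P u w = w1] =
     (fun u : R => u *: (const_mx 1 : 'rV[R]_1)) @^-1` S.
    apply/seteqP; split => u /=.
      move=> h; split => //=; rewrite /c00 !mxE mulr1 realize_vtx //; last exact: hPne.
      exact/star_vtx.
    case=> _ /=; rewrite /c00 !mxE mulr1 realize_vtx //; last exact: hPne.
    by move/star_vtx; apply.
  apply: open_comp => //; move=> x _; exact: scalel_continuous.
move=> u v; apply/funext => w.
have [->|hw] := eqVneq w [::]; first by rewrite !hP0.
have {}hw : w <> [::] by move/eqP: hw.
set w0 := P u w.
have conn : connected (@setT R) by apply/connected_intervalP => x y _ _ z _.
pose B := [set x : R | P x w = w0].
have oB : open B by apply: key => //; exact: hPne.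
have cB : closed B.
  have -> : B = ~` (\bigcup_(w1 in [set w1 | w1 <> [::] /\ w1 <> w0])
                      [set x : R | P x w = w1]).
    apply/seteqP; split => x /=.
      by move=> Bx [w1 [_ ne] /= e]; apply: ne; rewrite -e.
    move=> nx; apply: contrapT => nB; apply: nx.
    by exists (P x w) => //; split => //; exact: hPne.
  apply: open_closedC; apply: bigcup_open => w1 [hw1 _]; exact: key.
have := conn B (ex_intro _ u erefl) (ex_intro2 _ _ B oB (esym (setTI B)))
  (ex_intro2 _ _ B cB (esym (setTI B))).
move=> hB; have : B v by rewrite hB.
by [].
Qed.
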